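(* With the notation of the context, the following equalities of sets of eigenvalues hold: \[\Lambda_N[T]\cup\Lambda_D[T]=\Lambda_P[2T],\quad \Lambda_N[T]\cup\Lambda_{M_1}[T]=\Lambda_N[2T],\quad \Lambda_D[T]\cup\Lambda_{M_2}[T]=\Lambda_D[2T],\] \[\Lambda_{M_1}[T]\cup\Lambda_{M_2}[T]=\Lambda_A[2T],\quad \Lambda_N[T]\cup\Lambda_D[T]\cup\Lambda_{M_1}[T]\cup\Lambda_{M_2}[T]=\Lambda_P[4T].\] Moreover, $\Lambda_{M_1}[T]=\check\Lambda_{M_2}[T]$ and $\Lambda_{M_2}[T]=\check\Lambda_{M_1}[T]$.
   Context: Fix $n\ge 1$, $T>0$, $I=[0,T]$, $J=[0,2T]$. $W^{2n,1}(K)$: $u\in C^{2n-1}(K)$ with $u^{(2n-1)}$ absolutely continuous. Let $a_0,\dots,a_{2n-1}\in L^{\alpha}(I)$, $\alpha\ge1$, $Lu=u^{(2n)}+\sum_{k=0}^{2n-1}a_ku^{(k)}$ on $I$. $\widetilde L u=u^{(2n)}+\sum_{k=0}^{n-1}(\hat a_{2k+1}u^{(2k+1)}+\tilde a_{2k}u^{(2k)})$ on $J$, where $\tilde a_{2k}=a_{2k}$, $\hat a_{2k+1}=a_{2k+1}$ on $I$, and $\tilde a_{2k}(t)=a_{2k}(2T-t)$, $\hat a_{2k+1}(t)=-a_{2k+1}(2T-t)$ for $t\in(T,2T]$; $\widetilde{\widetilde L}$ on $[0,4T]$ is obtained by the same construction from $\widetilde L$ (reflection about $2T$). $\check L u(t)=u^{(2n)}(t)+\sum_{k=0}^{2n-1}(-1)^ka_k(T-t)u^{(k)}(t)$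 on $I$. For an operator $M$ and $\lambda\in\mathbb R$, $M[\lambda]u=Mu+\lambda u$ (i.e. the zero-order coefficient is increased by $\lambda$). A real $\lambda$ is an eigenvalue of the problem ''$M$ on $X$'' if $M[\lambda]u=0$ a.e. has a nontrivial solution $u\in X$. Spaces ($k=0,\dots,n-1$ unless stated): $X_{N,T}$: $u^{(2k+1)}(0)=u^{(2k+1)}(T)=0$; $X_{D,T}$: $u^{(2k)}(0)=u^{(2k)}(T)=0$; $X_{M_1,T}$: $u^{(2k+1)}(0)=u^{(2k)}(T)=0$; $X_{M_2,T}$: $u^{(2k)}(0)=u^{(2k+1)}(T)=0$ (in $W^{2n,1}(I)$); $X_{P,2T}$: $u^{(k)}(0)=u^{(k)}(2T)$, $k=0,\dots,2n-1$; $X_{A,2T}$: $u^{(k)}(0)=-u^{(k)}(2T)$, $k=0,\dots,2n-1$; $X_{N,2T}$: $u^{(2k+1)}(0)=u^{(2k+1)}(2T)=0$; $X_{D,2T}$: $u^{(2k)}(0)=u^{(2k)}(2T)=0$ (in $W^{2n,1}(J)$); $X_{P,4T}$: $u^{(k)}(0)=u^{(k)}(4T)$, $k=0,\dots,2n-1$ (in $W^{2n,1}([0,4T])$). $\Lambda_N[T],\Lambda_D[T],\Lambda_{M_1}[T],\Lambda_{M_2}[T]$ are the eigenvalue sets of $L$ on $X_{N,T},X_{D,T},X_{M_1,T},X_{M_2,T}$; $\Lambda_P[2T],\Lambda_A[2T],\Lambda_N[2T],\Lambda_D[2T]$ those of $\widetilde L$ on $X_{P,2T},X_{A,2T},X_{N,2T},X_{D,2T}$;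 $\Lambda_P[4T]$ that of $\widetilde{\widetilde L}$ on $X_{P,4T}$; $\check\Lambda_{M_1}[T],\check\Lambda_{M_2}[T]$ those of $\check L$ on $X_{M_1,T},X_{M_2,T}$. *)

(* Defs.v *)
(* classical reals. Lebesgue measure notions are defined
   elementarily below (covers by countable families of open intervals). *)
From Stdlib Require Import Reals Lra Lia.
Open Scope R_scope.

Definition Icc (L t : R) : Prop := 0 <= t <= L.

Definition covers (S : R -> Prop) (a b : nat -> R) : Prop :=
  (forall i, a i <= b i) /\ (forall t, S t -> exists i, a i < t < b i).

Definition null (S : R -> Prop) : Prop :=
  forall eps, 0 < eps -> exists a b, covers S a b /\
    forall N, sum_f_R0 (fun i => b i - a i) N <= eps.

Definition ae (L : R) (P : R -> Prop) : Prop :=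
  null (fun t => Icc L t /\ ~ P t).

Definition outer_ge (S : R -> Prop) (x : R) : Prop :=
  forall a b, covers S a b -> forall eps, 0 < eps ->
    exists N, x - eps <= sum_f_R0 (fun i => b i - a i) N.

Definition measurable (E : R -> Prop) : Prop :=
  forall eps, 0 < eps -> exists a b, covers E a b /\
    exists a' b', covers (fun t => (exists i, a i < t < b i) /\ ~ E t) a' b' /\
      forall N, sum_f_R0 (fun i => b' i - a' i) N <= eps.

(** |x|^alpha (with 0^alpha = 0). *)
Definition powabs (x alpha : R) : R :=
  if Req_EM_T x 0 then 0 else Rpower (Rabs x) alpha.

(** f in L^alpha([0,L]): f measurable on [0,L] and the Lebesgue integral of
    |f|^alpha over [0,L] is finite (bounded over nonnegative simple functions
    below |f|^alpha). *)
Definition Lp (L alpha : R) (f : R -> R) : Prop :=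
  (forall c, measurable (fun t => Icc L t /\ c < f t)) /\
  exists M, forall (N : nat) (c x : nat -> R) (E : nat -> R -> Prop),
    (forall i, (i <= N)%nat ->
       0 <= c i /\ 0 <= x i /\ measurable (E i) /\ outer_ge (E i) (x i) /\
       (forall t, E i t -> Icc L t /\ c i <= powabs (f t) alpha)) ->
    (forall i j, (i <= N)%nat -> (j <= N)%nat -> i <> j ->
       forall t, E i t -> ~ E j t) ->
    sum_f_R0 (fun i => c i * x i) N <= M.

(** Derivative of f at t relative to [0,L] (one-sided at endpoints). *)
Definition deriv_in (L : R) (f : R -> R) (t l : R) : Prop :=
  forall eps, 0 < eps -> exists delta, 0 < delta /\
    forall h, h <> 0 -> Rabs h < delta -> Icc L (t + h) ->
      Rabs ((f (t + h) - f t) / h - l) < eps.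

Definition abs_cont (L : R) (f : R -> R) : Prop :=
  forall eps, 0 < eps -> exists delta, 0 < delta /\
    forall (N : nat) (x y : nat -> R),
      (forall i, (i <= N)%nat -> 0 <= x i /\ x i <= y i /\ y i <= L) ->
      (forall i j, (i <= N)%nat -> (j <= N)%nat -> i <> j ->
         y i <= x j \/ y j <= x i) ->
      sum_f_R0 (fun i => y i - x i) N < delta ->
      sum_f_R0 (fun i => Rabs (f (y i) - f (x i))) N < eps.

(** u in W^{2n,1}([0,L]) with D k = u^{(k)} on [0,L] for k <= 2n-1:
    u in C^{2n-1}([0,L]) and u^{(2n-1)} absolutely continuous. *)
Definition W2n1 (n : nat) (L : R) (u : R -> R) (D : nat -> R -> R) : Prop :=
  (forall t, Icc L t -> D 0%nat t = u t) /\
  (forall k t, (k < 2 * n - 1)%nat -> Icc L t -> deriv_in L (D k) t (D (S k) t)) /\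
  abs_cont L (D (2 * n - 1)%nat).

Definition bcN (n : nat) (L : R) (D : nat -> R -> R) : Prop :=
  forall k, (k < n)%nat -> D (2*k+1)%nat 0 = 0 /\ D (2*k+1)%nat L = 0.
Definition bcD (n : nat) (L : R) (D : nat -> R -> R) : Prop :=
  forall k, (k < n)%nat -> D (2*k)%nat 0 = 0 /\ D (2*k)%nat L = 0.
Definition bcM1 (n : nat) (L : R) (D : nat -> R -> R) : Prop :=
  forall k, (k < n)%nat -> D (2*k+1)%nat 0 = 0 /\ D (2*k)%nat L = 0.
Definition bcM2 (n : nat) (L : R) (D : nat -> R -> R) : Prop :=
  forall k, (k < n)%nat -> D (2*k)%nat 0 = 0 /\ D (2*k+1)%nat L = 0.
Definition bcP (n : nat) (L : R) (D : nat -> R -> R) : Prop :=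
  forall k, (k < 2 * n)%nat -> D k 0 = D k L.
Definition bcA (n : nat) (L : R) (D : nat -> R -> R) : Prop :=
  forall k, (k < 2 * n)%nat -> D k 0 = - D k L.

Definition eigenvalue (n : nat) (L : R) (b : nat -> R -> R)
    (BC : nat -> R -> (nat -> R -> R) -> Prop) (lam : R) : Prop :=
  exists (u : R -> R) (D : nat -> R -> R),
    W2n1 n L u D /\ BC n L D /\ (exists t, Icc L t /\ u t <> 0) /\
    ae L (fun t => exists l, deriv_in L (D (2 * n - 1)%nat) t l /\
       l + sum_f_R0 (fun k => b k t * D k t) (2 * n - 1) + lam * u t = 0).

(** Reflection of the coefficients about S: on [0,S] unchanged, on (S,2S]
    b_k(t) := (-1)^k b_k(2S - t)  (gives tilde a_{2k}, hat a_{2k+1}). *)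
Definition refl (S : R) (b : nat -> R -> R) (k : nat) (t : R) : R :=
  if Rle_dec t S then b k t else (-1) ^ k * b k (2 * S - t).

Definition checkc (T : R) (a : nat -> R -> R) (k : nat) (t : R) : R :=
  (-1) ^ k * a k (T - t).

(* Main.v *)
Require Import Defs.
From Stdlib Require Import Reals Lra Lia FunctionalExtensionality Classical.
Open Scope R_scope.

Lemma null_sub (S S' : R -> Prop) :
  (forall t, S t -> S' t) -> null S' -> null S.
Proof.
  intros H N eps He. destruct (N eps He) as (a & b & [C1 C2] & Hs).
  exists a, b. split; [split|]; auto.
Qed.

Lemma null_refl (S : R -> Prop) c : null S -> null (fun t => S (c - t)).
Proof.
  intros N eps He. destruct (N eps He) as (a & b & [C1 C2] & Hs).
  exists (fun i => c - b i), (fun i => c - a i). split; [split|].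
  - intros i; specialize (C1 i); lra.
  - intros t Ht. destruct (C2 _ Ht) as [i Hi]. exists i; lra.
  - intros M. rewrite (sum_eq _ (fun i => b i - a i)); auto. intros; ring.
Qed.

Lemma null_point p : null (fun t => t = p).
Proof.
  intros eps He.
  exists (fun _ => p - eps/4), (fun i => match i with O => p + eps/4 | _ => p - eps/4 end).
  split; [split|].
  - intros [|i]; lra.
  - intros t Ht. exists O. lra.
  - assert (forall N, sum_f_R0 (fun i => (match i with O => p + eps/4 | _ => p - eps/4 end) - (p - eps/4)) N = eps/2).
    { induction N; simpl. lra. rewrite IHN. lra. }
    intros N; rewrite H; lra.
Qed.

Definition inter (f g : nat -> R) (i : nat) : R :=
  if Nat.even i then f (Nat.div2 i) else g (Nat.div2 i).

Lemma inter_even f g m : inter f g (2*m) = f m.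
Proof. unfold inter. rewrite Nat.even_even, Nat.div2_double. auto. Qed.
Lemma inter_odd f g m : inter f g (2*m+1) = g m.
Proof. unfold inter. rewrite Nat.even_odd. replace (2*m+1)%nat with (S (2*m)) by lia.
  rewrite Nat.div2_succ_double. auto. Qed.

Lemma sum_inter f g M :
  sum_f_R0 (inter f g) (2*M+1) = sum_f_R0 f M + sum_f_R0 g M.
Proof.
  induction M.
  - simpl. rewrite <- (inter_even f g 0), <- (inter_odd f g 0). simpl. ring.
  - replace (2 * S M + 1)%nat with (S (S (2*M+1))) by lia.
    change (sum_f_R0 (inter f g) (S (S (2*M+1)))) with
      (sum_f_R0 (inter f g) (2*M+1) + inter f g (S (2*M+1)) + inter f g (S (S (2*M+1)))).
    rewrite IHM. replace (S (2*M+1)) with (2 * S M)%nat by lia.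
    replace (S (2*S M)) with (2 * S M + 1)%nat by lia.
    rewrite inter_even, inter_odd. simpl. ring.
Qed.

Lemma sum_mono_N (c : nat -> R) N M :
  (forall i, 0 <= c i) -> (N <= M)%nat -> sum_f_R0 c N <= sum_f_R0 c M.
Proof.
  intros Hc H. induction H. lra. simpl. specialize (Hc (S m)). lra.
Qed.

Lemma null_union (S1 S2 : R -> Prop) :
  null S1 -> null S2 -> null (fun t => S1 t \/ S2 t).
Proof.
  intros N1 N2 eps He.
  destruct (N1 (eps/2)) as (a1 & b1 & [C1 C2] & H1); [lra|].
  destruct (N2 (eps/2)) as (a2 & b2 & [D1 D2] & H2); [lra|].
  exists (inter a1 a2), (inter b1 b2). split; [split|].
  - intros i; unfold inter; destruct (Nat.even i); auto.
  - intros t [Ht|Ht].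
    + destruct (C2 _ Ht) as [i Hi]. exists (2*i)%nat. rewrite !inter_even. auto.
    + destruct (D2 _ Ht) as [i Hi]. exists (2*i+1)%nat. rewrite !inter_odd. auto.
  - intros M.
    apply Rle_trans with (sum_f_R0 (fun i => inter b1 b2 i - inter a1 a2 i) (2*M+1)).
    + apply sum_mono_N; [|lia]. intros i; unfold inter; destruct (Nat.even i).
      specialize (C1 (Nat.div2 i)); lra. specialize (D1 (Nat.div2 i)); lra.
    + rewrite (sum_eq _ (inter (fun i => b1 i - a1 i) (fun i => b2 i - a2 i))).
      * rewrite sum_inter. specialize (H1 M); specialize (H2 M); lra.
      * intros i _; unfold inter; destruct (Nat.even i); auto.
Qed.

Lemma ae_from L (P : R -> Prop) (S1 S2 : R -> Prop) :
  null S1 -> null S2 -> (forall t, Icc L t -> ~ P t -> S1 t \/ S2 t) -> ae L P.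
Proof.
  intros N1 N2 H. unfold ae. apply (null_sub _ _ (fun t Ht => H t (proj1 Ht) (proj2 Ht))).
  apply null_union; auto.
Qed.

Definition deriv_on (P : R -> Prop) L (f : R -> R) t l := forall eps, 0<eps -> exists delta, 0<delta /\
  forall h, h<>0 -> Rabs h < delta -> Icc L (t+h) -> P h -> Rabs ((f (t+h) - f t)/h - l) < eps.

Lemma deriv_on_True L f t l : deriv_on (fun _ => True) L f t l -> deriv_in L f t l.
Proof. intros H eps He. destruct (H eps He) as (d & Hd & H'). exists d; split; auto. Qed.

Lemma deriv_on_split L f t l :
  deriv_on (fun h => h < 0) L f t l -> deriv_on (fun h => 0 < h) L f t l -> deriv_in L f t l.
Proof.
  intros H1 H2 eps He. destruct (H1 eps He) as (d1 & Hd1 & H1').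
  destruct (H2 eps He) as (d2 & Hd2 & H2').
  exists (Rmin d1 d2); split. apply Rmin_glb_lt; auto.
  intros h Hh Ha Hi. assert (Rabs h < d1) by (apply Rlt_le_trans with (1:=Ha); apply Rmin_l).
  assert (Rabs h < d2) by (apply Rlt_le_trans with (1:=Ha); apply Rmin_r).
  destruct (Rlt_or_le h 0). apply H1'; auto. apply H2'; auto. lra.
Qed.

Lemma deriv_transfer L1 L2 (f g : R -> R) t1 t2 l sg c d0 (P : R -> Prop) :
  deriv_in L1 f t1 l -> (sg = 1 \/ sg = -1) -> 0 < d0 ->
  (forall h, h<>0 -> Rabs h < d0 -> Icc L2 (t2+h) -> P h ->
     Icc L1 (t1 + sg*h) /\ g (t2+h) - g t2 = c * (f (t1 + sg*h) - f t1)) ->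
  deriv_on P L2 g t2 (c*sg*l).
Proof.
  intros Hf Hsg Hd0 H eps He.
  assert (Hc : 0 < Rabs c + 1) by (pose proof (Rabs_pos c); lra).
  destruct (Hf (eps / (Rabs c + 1))) as (d & Hd & Hf').
  { apply Rdiv_lt_0_compat; auto. }
  exists (Rmin d0 d); split. apply Rmin_glb_lt; auto.
  intros h Hh Ha Hi HP.
  assert (Rabs h < d0) by (apply Rlt_le_trans with (1:=Ha); apply Rmin_l).
  assert (Rabs h < d) by (apply Rlt_le_trans with (1:=Ha); apply Rmin_r).
  destruct (H h Hh H0 Hi HP) as [Hi' Heq].
  assert (Hsh : sg * h <> 0) by (destruct Hsg; subst; intro; apply Hh; lra).
  assert (Habs : Rabs (sg*h) = Rabs h) by (destruct Hsg; subst;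
     [rewrite Rmult_1_l | replace (-1*h) with (-h) by ring; rewrite Rabs_Ropp]; auto).
  specialize (Hf' (sg*h) Hsh ltac:(rewrite Habs; auto) Hi').
  rewrite Heq.
  replace (c * (f (t1 + sg * h) - f t1) / h - c * sg * l) with
     ((c*sg) * ((f (t1 + sg * h) - f t1) / (sg*h) - l)).
  2:{ destruct Hsg; subst; field; auto. }
  rewrite Rabs_mult.
  assert (Rabs (c*sg) = Rabs c).
  { destruct Hsg; subst. rewrite Rmult_1_r; auto.
    replace (c * -1) with (- c) by ring. apply Rabs_Ropp. }
  rewrite H2.
  apply Rle_lt_trans with (Rabs c * (eps / (Rabs c + 1))).
  apply Rmult_le_compat_l. apply Rabs_pos. lra.
  apply Rlt_le_trans with ((Rabs c + 1) * (eps / (Rabs c + 1))).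
  apply Rmult_lt_compat_r. apply Rdiv_lt_0_compat; auto. lra.
  right; field; lra.
Qed.

Lemma deriv_add L f g t l1 l2 :
  deriv_in L f t l1 -> deriv_in L g t l2 -> deriv_in L (fun x => f x + g x) t (l1 + l2).
Proof.
  intros H1 H2 eps He. destruct (H1 (eps/2)) as (d1 & Hd1 & H1'); [lra|].
  destruct (H2 (eps/2)) as (d2 & Hd2 & H2'); [lra|].
  exists (Rmin d1 d2); split. apply Rmin_glb_lt; auto.
  intros h Hh Ha Hi. assert (Rabs h < d1) by (apply Rlt_le_trans with (1:=Ha); apply Rmin_l).
  assert (Rabs h < d2) by (apply Rlt_le_trans with (1:=Ha); apply Rmin_r).
  specialize (H1' h Hh H Hi). specialize (H2' h Hh H0 Hi).
  replace ((f (t + h) + g (t + h) - (f t + g t)) / h - (l1 + l2)) with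
    (((f (t + h) - f t) / h - l1) + ((g (t + h) - g t) / h - l2)) by (field; auto).
  apply Rle_lt_trans with (1 := Rabs_triang _ _). lra.
Qed.

Lemma deriv_comb L f g t l1 l2 s :
  deriv_in L f t l1 -> deriv_in L g t l2 -> deriv_in L (fun x => f x + s * g x) t (l1 + s * l2).
Proof.
  intros H1 H2. apply deriv_add; auto.
  replace (s*l2) with (s*1*l2) by ring. apply deriv_on_True.
  apply (deriv_transfer L L g _ t t l2 1 s 1); auto; try lra.
  intros h _ _ Hi _. rewrite Rmult_1_l. split; auto. ring.
Qed.

Lemma deriv_restrict L L' f t l : L <= L' -> 0 <= L ->
  deriv_in L' f t l -> deriv_in L f t l.
Proof.
  intros HL H0 H eps He. destruct (H eps He) as (d & Hd & H'). exists d; split; auto.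
  intros h Hh Ha Hi. apply H'; auto. unfold Icc in *; lra.
Qed.

Lemma deriv_refl L f t l c : Icc L t -> deriv_in L f (L - t) l ->
  deriv_in L (fun x => c * f (L - x)) t (- c * l).
Proof.
  intros Ht H. replace (-c*l) with (c*(-1)*l) by ring. apply deriv_on_True.
  apply (deriv_transfer L L f _ (L-t) t l (-1) c 1); auto; try lra.
  intros h _ _ Hi _. unfold Icc in *. split. lra.
  replace (L - (t+h)) with (L - t + -1*h) by ring. ring.
Qed.

Definition glueF (T c : R) (f : R -> R) (t : R) : R :=
  if Rle_dec t T then f t else c * f (2*T - t).

Lemma glue_lt T c f t l : 0 <= t < T -> deriv_in T f t l -> deriv_in (2*T) (glueF T c f) t l.
Proof.
  intros Ht H. replace l with (1*1*l) by ring. apply deriv_on_True.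
  apply (deriv_transfer T (2*T) f _ t t l 1 1 (T - t)); auto; try lra.
  intros h _ Ha Hi _. unfold Icc in *. rewrite Rmult_1_l.
  pose proof (Rle_abs h). pose proof (Rle_abs (-h)). rewrite Rabs_Ropp in H1.
  split. lra. unfold glueF. destruct (Rle_dec (t+h) T); [|lra].
  destruct (Rle_dec t T); [|lra]. ring.
Qed.

Lemma glue_gt T c f t l : T < t <= 2*T -> deriv_in T f (2*T - t) l ->
  deriv_in (2*T) (glueF T c f) t (- c * l).
Proof.
  intros Ht H. replace (-c*l) with (c*(-1)*l) by ring. apply deriv_on_True.
  apply (deriv_transfer T (2*T) f _ (2*T-t) t l (-1) c (t - T)); auto; try lra.
  intros h _ Ha Hi _. unfold Icc in *.
  pose proof (Rle_abs h). pose proof (Rle_abs (-h)). rewrite Rabs_Ropp in H1.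
  split. lra. unfold glueF. destruct (Rle_dec (t+h) T); [lra|].
  destruct (Rle_dec t T); [lra|].
  replace (2 * T - (t + h)) with (2 * T - t + -1 * h) by ring. ring.
Qed.

Lemma glue_eq T c f l : 0 < T -> deriv_in T f T l -> c * f T = f T -> l = - c * l ->
  deriv_in (2*T) (glueF T c f) T l.
Proof.
  intros HT H Hc Hl. apply deriv_on_split.
  - replace l with (1*1*l) by ring.
    apply (deriv_transfer T (2*T) f _ T T l 1 1 1); auto; try lra.
    intros h _ Ha Hi Hh. unfold Icc in *. rewrite Rmult_1_l. split. lra.
    unfold glueF. destruct (Rle_dec (T+h) T); [|lra]. destruct (Rle_dec T T); [|lra]. ring.
  - rewrite Hl. replace (-c*l) with (c*(-1)*l) by ring.
    apply (deriv_transfer T (2*T) f _ T T l (-1) c 1); auto; try lra.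
    intros h _ Ha Hi Hh. unfold Icc in *. split. lra.
    unfold glueF. destruct (Rle_dec (T+h) T); [lra|]. destruct (Rle_dec T T); [|lra].
    replace (2 * T - (T + h)) with (T + -1 * h) by ring. rewrite Rmult_minus_distr_l, Hc. ring.
Qed.

Lemma abs_cont_restrict L L' f : L <= L' -> abs_cont L' f -> abs_cont L f.
Proof.
  intros HL H eps He. destruct (H eps He) as (d & Hd & H'). exists d; split; auto.
  intros N x y Hxy Hd' Hs. apply H'; auto. intros i Hi; specialize (Hxy i Hi); lra.
Qed.

Lemma abs_cont_comb L f g s : abs_cont L f -> abs_cont L g -> abs_cont L (fun t => f t + s * g t).
Proof.
  intros H1 H2 eps He.
  assert (Hc : 0 < Rabs s + 1) by (pose proof (Rabs_pos s); lra).
  destruct (H1 (eps/2)) as (d1 & Hd1 & H1'); [lra|].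
  destruct (H2 (eps/2/(Rabs s + 1))) as (d2 & Hd2 & H2').
  { apply Rdiv_lt_0_compat; lra. }
  exists (Rmin d1 d2); split. apply Rmin_glb_lt; auto.
  intros N x y Hxy Hdis Hs.
  assert (S1 := H1' N x y Hxy Hdis ltac:(apply Rlt_le_trans with (1:=Hs); apply Rmin_l)).
  assert (S2 := H2' N x y Hxy Hdis ltac:(apply Rlt_le_trans with (1:=Hs); apply Rmin_r)).
  apply Rle_lt_trans with (sum_f_R0 (fun i => Rabs (f (y i) - f (x i)) + Rabs (g (y i) - g (x i)) * Rabs s) N).
  { apply sum_Rle. intros i _.
    replace (f (y i) + s * g (y i) - (f (x i) + s * g (x i))) with
      ((f (y i) - f (x i)) + s * (g (y i) - g (x i))) by ring.
    apply Rle_trans with (1 := Rabs_triang _ _). rewrite Rabs_mult. lra. }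
  rewrite plus_sum, <- scal_sum.
  assert (Rabs s * sum_f_R0 (fun i => Rabs (g (y i) - g (x i))) N <= (Rabs s + 1) * (eps/2/(Rabs s+1))).
  { apply Rmult_le_compat. apply Rabs_pos.
    apply cond_pos_sum. intros; apply Rabs_pos. lra. lra. }
  replace ((Rabs s + 1) * (eps/2/(Rabs s+1))) with (eps/2) in H by (field; lra).
  lra.
Qed.

Lemma abs_cont_refl L f c : abs_cont L f -> abs_cont L (fun t => c * f (L - t)).
Proof.
  intros H. replace (fun t => c * f (L - t)) with (fun t => 0 + c * f (L - t)).
  2:{ apply functional_extensionality_dep; intros; ring. }
  cut (abs_cont L (fun t => f (L - t))).
  { intros H'. apply (abs_cont_comb L (fun _ => 0) _ c); auto.
    intros eps He. exists 1; split; [lra|]. intros. 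
    rewrite (sum_eq _ (fun _ => 0)). 2:{ intros; unfold Rminus; rewrite Rplus_opp_r, Rabs_R0; auto. }
    assert (forall M, sum_f_R0 (fun _ => 0) M = 0) by (induction M; simpl; lra). rewrite H3; auto. }
  intros eps He. destruct (H eps He) as (d & Hd & H'). exists d; split; auto.
  intros N x y Hxy Hdis Hs.
  specialize (H' N (fun i => L - y i) (fun i => L - x i)).
  rewrite (sum_eq _ (fun i => Rabs (f (L - x i) - f (L - y i)))).
  - apply H'.
    + intros i Hi; specialize (Hxy i Hi); lra.
    + intros i j Hi Hj Hij. destruct (Hdis i j Hi Hj Hij); lra.
    + rewrite (sum_eq _ (fun i => y i - x i)); auto. intros; ring.
  - intros i _. rewrite <- Rabs_Ropp. f_equal. ring.
Qed.

Lemma glueF_le T c f z : z <= T -> glueF T c f z = f z.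
Proof. intros; unfold glueF; destruct (Rle_dec z T); auto; lra. Qed.
Lemma glueF_ge T c f z : T <= z -> c * f T = f T -> glueF T c f z = c * f (2*T - z).
Proof. intros H Hc; unfold glueF; destruct (Rle_dec z T); auto.
  assert (z = T) by lra. subst z. replace (2*T - T) with T by ring. auto. Qed.

Lemma abs_cont_glue T f c : 0 < T -> Rabs c = 1 -> c * f T = f T -> abs_cont T f ->
  abs_cont (2*T) (glueF T c f).
Proof.
  intros HT Hc Hf H eps He. destruct (H (eps/2)) as (d & Hd & H'); [lra|].
  exists d; split; auto. intros N x y Hxy Hdis Hs.
  assert (S1 := H' N (fun i => Rmin (x i) T) (fun i => Rmin (y i) T)).
  assert (S2 := H' N (fun i => 2*T - Rmax (y i) T) (fun i => 2*T - Rmax (x i) T)).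
  assert (Hm : forall i, (i <= N)%nat -> 0 <= Rmin (y i) T - Rmin (x i) T <= y i - x i /\
                         0 <= Rmax (y i) T - Rmax (x i) T <= y i - x i).
  { intros i Hi; specialize (Hxy i Hi). unfold Rmin, Rmax.
    destruct (Rle_dec (y i) T), (Rle_dec (x i) T); lra. }
  assert (Hle : forall u v w, u <= v -> v <= w -> Rmin u T <= Rmin w T) by
    (intros; unfold Rmin; destruct (Rle_dec u T), (Rle_dec w T); lra).
  assert (Hle2 : forall u v w, u <= v -> v <= w -> Rmax u T <= Rmax w T) by
    (intros; unfold Rmax; destruct (Rle_dec u T), (Rle_dec w T); lra).
  specialize (S1 ltac:(intros i Hi; specialize (Hxy i Hi); split; [apply Rmin_glb; lra|
     split; [apply (Hle _ (x i)); lra| apply Rmin_r]])).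
  specialize (S2 ltac:(intros i Hi; specialize (Hxy i Hi); split;
     [unfold Rmax; destruct (Rle_dec (y i) T); lra|
     split; [apply Rplus_le_compat_l, Ropp_le_contravar, (Hle2 _ (x i)); lra|
       pose proof (Rmax_r (x i) T); lra]])).
  specialize (S1 ltac:(intros i j Hi Hj Hij; destruct (Hdis i j Hi Hj Hij);
     [left; apply (Hle _ (y i)); lra | right; apply (Hle _ (y j)); lra])).
  specialize (S2 ltac:(intros i j Hi Hj Hij; destruct (Hdis i j Hi Hj Hij);
     [right; apply Rplus_le_compat_l, Ropp_le_contravar, (Hle2 _ (y i)); lra |
      left; apply Rplus_le_compat_l, Ropp_le_contravar, (Hle2 _ (y j)); lra])).
  specialize (S1 ltac:(apply Rle_lt_trans with (2:=Hs); apply sum_Rle; intros i Hi; apply Hm; auto)).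
  specialize (S2 ltac:(apply Rle_lt_trans with (2:=Hs); apply sum_Rle; intros i Hi;
     destruct (Hm i Hi); lra)).
  apply Rle_lt_trans with (sum_f_R0 (fun i => Rabs (f (Rmin (y i) T) - f (Rmin (x i) T)) +
     Rabs (f (2 * T - Rmax (x i) T) - f (2 * T - Rmax (y i) T))) N).
  2:{ rewrite plus_sum. lra. }
  apply sum_Rle. intros i Hi. specialize (Hxy i Hi).
  replace (glueF T c f (y i) - glueF T c f (x i)) with
    ((glueF T c f (Rmin (y i) T) - glueF T c f (Rmin (x i) T)) +
     (glueF T c f (Rmax (y i) T) - glueF T c f (Rmax (x i) T))).
  2:{ unfold Rmin, Rmax. destruct (Rle_dec (y i) T), (Rle_dec (x i) T); try lra; ring. }
  rewrite !glueF_le by apply Rmin_r. rewrite !glueF_ge by (auto; apply Rmax_r).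
  apply Rle_trans with (1:=Rabs_triang _ _). apply Rplus_le_compat_l.
  rewrite <- Rmult_minus_distr_l, Rabs_mult, Hc, Rmult_1_l. right.
  rewrite <- Rabs_Ropp. f_equal. ring.
Qed.

Definition odeP n L (b : nat -> R -> R) lam (u : R -> R) (D : nat -> R -> R) t :=
  exists l, deriv_in L (D (2*n-1)%nat) t l /\
    l + sum_f_R0 (fun k => b k t * D k t) (2*n-1) + lam * u t = 0.
Definition sol n L b lam u D := W2n1 n L u D /\ ae L (odeP n L b lam u D).

Lemma eig_sol n L b BC lam : eigenvalue n L b BC lam <->
  exists u D, sol n L b lam u D /\ BC n L D /\ exists t, Icc L t /\ u t <> 0.
Proof. unfold eigenvalue, sol, odeP. firstorder. Qed.

Lemma null_empty : null (fun _ => False).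
Proof. apply (null_sub _ _ (fun t (H:False) => match H with end) (null_point 0)). Qed.

Lemma sol_restrict n L L' b b' lam u D : 0 <= L <= L' -> sol n L' b' lam u D ->
  (forall k t, Icc L t -> b' k t = b k t) -> sol n L b lam u D.
Proof.
  intros HL [[W1 [W2 W3]] Hae] Hb. split; [split; [|split]|].
  - intros t Ht; apply W1; unfold Icc in *; lra.
  - intros k t Hk Ht. apply (deriv_restrict L L'). lra. lra. apply W2; auto; unfold Icc in *; lra.
  - apply (abs_cont_restrict L L'); auto; lra.
  - apply (ae_from _ _ _ _ Hae null_empty). intros t Ht Hn. left. split.
    unfold Icc in *; lra. intros [l [Hl Hq]]. apply Hn. exists l. split.
    apply (deriv_restrict L L'); auto; lra.
    rewrite <- Hq. f_equal. f_equal. apply sum_eq. intros; rewrite Hb; auto.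
Qed.

Lemma sol_coef n L b b' lam u D p : sol n L b lam u D ->
  (forall k t, Icc L t -> t <> p -> b k t = b' k t) -> sol n L b' lam u D.
Proof.
  intros [W Hae] Hb. split; auto.
  apply (ae_from _ _ _ _ Hae (null_point p)). intros t Ht Hn.
  destruct (Req_dec t p); [right; auto|left]. split; auto.
  intros [l [Hl Hq]]. apply Hn. exists l. split; auto.
  rewrite <- Hq. f_equal. f_equal. apply sum_eq. intros; rewrite Hb; auto.
Qed.

Lemma sol_comb n L b lam u1 D1 u2 D2 s : sol n L b lam u1 D1 -> sol n L b lam u2 D2 ->
  sol n L b lam (fun t => u1 t + s * u2 t) (fun k t => D1 k t + s * D2 k t).
Proof.
  intros [[W1 [W2 W3]] Hae] [[V1 [V2 V3]] Hae']. split; [split; [|split]|].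
  - intros t Ht. rewrite W1, V1; auto.
  - intros k t Hk Ht. apply deriv_comb; auto.
  - apply abs_cont_comb; auto.
  - apply (ae_from _ _ _ _ Hae Hae'). intros t Ht Hn.
    destruct (classic (odeP n L b lam u1 D1 t)) as [[l1 [H1 E1]]|]; [|left; auto].
    destruct (classic (odeP n L b lam u2 D2 t)) as [[l2 [H2 E2]]|]; [|right; auto].
    exfalso. apply Hn. exists (l1 + s * l2). split. apply deriv_comb; auto.
    rewrite (sum_eq _ (fun k => b k t * D1 k t + b k t * D2 k t * s)).
    2:{ intros; ring. }
    rewrite plus_sum, <- scal_sum.
    replace 0 with (0 + s * 0) by ring. rewrite <- E1, <- E2 at 1. ring.
Qed.

Lemma pow_sq k : (-1)^k * (-1)^k = 1.
Proof. rewrite <- Rpow_mult_distr. replace (-1 * -1) with 1 by ring. apply pow1. Qed.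

Lemma pow_odd n : (1 <= n)%nat -> (-1)^(2*n-1) = -1.
Proof. intros. replace (2*n-1)%nat with (S (2*(n-1))) by lia. apply pow_1_odd. Qed.

Lemma sol_refl n L b lam u D : (1 <= n)%nat -> 0 <= L -> sol n L b lam u D ->
  sol n L (checkc L b) lam (fun t => u (L - t)) (fun k t => (-1)^k * D k (L - t)).
Proof.
  intros Hn HL [[W1 [W2 W3]] Hae].
  assert (HI : forall t, Icc L t -> Icc L (L - t)) by (unfold Icc; intros; lra).
  split; [split; [|split]|].
  - intros t Ht. simpl. rewrite W1; auto. ring.
  - intros k t Hk Ht.
    replace ((-1)^(S k) * D (S k) (L - t)) with (- (-1)^k * D (S k) (L - t)) by (simpl; ring).
    apply deriv_refl; auto.
  - apply abs_cont_refl; auto.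
  - apply (ae_from _ _ _ _ (null_refl _ L Hae) null_empty). intros t Ht Hn'. left.
    split. auto. intros [l [Hl Hq]]. apply Hn'. exists l. split.
    + replace l with (- (-1)^(2*n-1) * l) by (rewrite pow_odd; auto; ring).
      apply deriv_refl; auto.
    + rewrite <- Hq. f_equal. f_equal. apply sum_eq. intros k _. unfold checkc.
      replace ((-1) ^ k * b k (L - t) * ((-1) ^ k * D k (L - t))) with
        (((-1)^k * (-1)^k) * (b k (L - t) * D k (L - t))) by ring.
      rewrite pow_sq. ring.
Qed.

Lemma sol_glue n T a lam u D s : (1 <= n)%nat -> 0 < T -> (s = 1 \/ s = -1) ->
  sol n T a lam u D ->
  (forall k, (k < 2*n)%nat -> s * (-1)^k * D k T = D k T) ->
  sol n (2*T) (refl T a) lam (glueF T s u) (fun k => glueF T (s * (-1)^k) (D k)).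
Proof.
  intros Hn HT Hs [[W1 [W2 W3]] Hae] Hp.
  assert (HI : forall t, Icc (2*T) t -> T < t -> Icc T (2*T - t)) by (unfold Icc; intros; lra).
  assert (HI' : forall t, Icc (2*T) t -> t <= T -> Icc T t) by (unfold Icc; intros; lra).
  split; [split; [|split]|].
  - intros t Ht. unfold glueF. simpl. destruct (Rle_dec t T). apply W1; apply HI'; auto.
    rewrite W1. ring. apply HI; auto; lra.
  - intros k t Hk Ht.
    destruct (Rtotal_order t T) as [Hlt|[Heq|Hgt]].
    + rewrite glueF_le by lra. apply glue_lt. unfold Icc in Ht; lra. apply W2; [lia| unfold Icc in *; lra].
    + subst t. rewrite glueF_le by lra. apply glue_eq; auto. apply W2; [lia| unfold Icc in *; lra].
      apply Hp; lia.
      specialize (Hp (S k) ltac:(lia)). simpl in Hp. lra.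
    + unfold glueF at 2. destruct (Rle_dec t T); [lra|].
      replace (s * (-1) ^ S k * D (S k) (2 * T - t)) with
        (- (s * (-1)^k) * D (S k) (2 * T - t)) by (simpl; ring).
      apply glue_gt. unfold Icc in Ht; lra. apply W2; [lia| apply HI; auto; lra].
  - apply abs_cont_glue; auto.
    rewrite Rabs_mult, pow_1_abs. destruct Hs; subst; [rewrite Rabs_R1|rewrite Rabs_left by lra]; lra.
    apply Hp; lia.
  - apply (ae_from _ _ _ _ Hae (null_union _ _ (null_refl _ (2*T) Hae) (null_point T))).
    intros t Ht Hn'.
    destruct (Rtotal_order t T) as [Hlt|[Heq|Hgt]]; [left|right;right;auto|right;left].
    + split. unfold Icc in *; lra. intros [l [Hl Hq]]. apply Hn'. exists l. split.
      apply glue_lt; auto. unfold Icc in Ht; lra.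
      rewrite <- Hq. rewrite glueF_le by lra. f_equal. f_equal. apply sum_eq. intros k _.
      rewrite glueF_le by lra. unfold refl. destruct (Rle_dec t T); [auto|lra].
    + split. apply HI; auto. intros [l [Hl Hq]]. apply Hn'. exists (s*l). split.
      replace (s*l) with (- (s * (-1)^(2*n-1)) * l) by (rewrite pow_odd; auto; ring).
      apply glue_gt; auto. unfold Icc in Ht; lra.
      unfold glueF. destruct (Rle_dec t T); [lra|].
      rewrite (sum_eq _ (fun k => a k (2*T - t) * D k (2*T - t) * s)).
      rewrite <- scal_sum. replace 0 with (s * 0) by ring. rewrite <- Hq. ring.
      intros k _. unfold refl. destruct (Rle_dec t T); [lra|].
      replace ((-1) ^ k * a k (2 * T - t) * (s * (-1) ^ k * D k (2 * T - t))) with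
        (((-1)^k * (-1)^k) * (a k (2 * T - t) * D k (2 * T - t) * s)) by ring.
      rewrite pow_sq. ring.
Qed.

Definition symD T s (D : nat -> R -> R) := fun k t => D k t + s * ((-1)^k * D k (2*T - t)).
Definition glD T s (D : nat -> R -> R) := fun k => glueF T (s * (-1)^k) (D k).

Lemma glue_eig n T a lam s (BC1 BC2 : nat -> R -> (nat -> R -> R) -> Prop) :
  (1 <= n)%nat -> 0 < T -> (s = 1 \/ s = -1) -> eigenvalue n T a BC1 lam ->
  (forall D, BC1 n T D -> (forall k, (k < 2*n)%nat -> s * (-1)^k * D k T = D k T) /\
     BC2 n (2*T) (glD T s D)) ->
  eigenvalue n (2*T) (refl T a) BC2 lam.
Proof.
  intros Hn HT Hs He HB. apply eig_sol in He. destruct He as (u & D & Hsol & Hbc & t0 & Ht0 & Hu).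
  destruct (HB D Hbc) as [Hp Hbc2].
  apply eig_sol. exists (glueF T s u), (glD T s D). split; [|split; auto].
  apply sol_glue; auto.
  exists t0. split. unfold Icc in *; lra. rewrite glueF_le; auto. unfold Icc in *; lra.
Qed.

Lemma refl_check T a k t : Icc (2*T) t -> t <> T -> checkc (2*T) (refl T a) k t = refl T a k t.
Proof.
  intros Ht Hne. unfold checkc, refl.
  destruct (Rle_dec (2*T - t) T), (Rle_dec t T); try lra.
  replace (2 * T - (2 * T - t)) with t by ring.
    rewrite <- Rmult_assoc, pow_sq. ring.
Qed.

Lemma split_eig n T a lam (BC BC1 BC3 : nat -> R -> (nat -> R -> R) -> Prop) :
  (1 <= n)%nat -> 0 < T -> eigenvalue n (2*T) (refl T a) BC lam ->
  (forall D, BC n (2*T) D -> BC1 n T (symD T 1 D) /\ BC3 n T (symD T (-1) D)) ->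
  eigenvalue n T a BC1 lam \/ eigenvalue n T a BC3 lam.
Proof.
  intros Hn HT He HB. apply eig_sol in He. destruct He as (u & D & Hsol & Hbc & t0 & Ht0 & Hu).
  destruct (HB D Hbc) as [H1 H3].
  assert (Hr := sol_refl n (2*T) (refl T a) lam u D Hn ltac:(lra) Hsol).
  assert (Hr' := sol_coef _ _ _ (refl T a) _ _ _ T Hr (fun k t Ht Hne => refl_check T a k t Ht Hne)).
  assert (Hs : forall s, sol n T a lam (fun t => u t + s * u (2*T - t)) (symD T s D)).
  { intros s. apply (sol_restrict _ _ (2*T) _ (refl T a)). lra.
    apply (sol_comb _ _ _ _ _ _ _ _ s Hsol Hr').
    intros k t Ht. unfold refl. destruct (Rle_dec t T); auto. unfold Icc in Ht; lra. }
  assert (Hgood : forall s, (exists t, Icc (2*T) t /\ u t + s * u (2*T - t) <> 0) ->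
      (s = 1 \/ s = -1) -> exists t, Icc T t /\ u t + s * u (2*T - t) <> 0).
  { intros s [t [Ht Hne]] Hs1. destruct (Rle_dec t T).
    - exists t; split; auto. unfold Icc in *; lra.
    - exists (2*T - t). split. unfold Icc in *; lra.
      replace (2*T - (2*T - t)) with t by ring. intro; apply Hne.
      destruct Hs1; subst; lra. }
  destruct (Req_dec (u t0 + 1 * u (2*T - t0)) 0).
  - right. apply eig_sol. exists (fun t => u t + -1 * u (2*T - t)), (symD T (-1) D).
    split; auto. split; auto. apply Hgood; auto. exists t0; split; auto. lra.
  - left. apply eig_sol. exists (fun t => u t + 1 * u (2*T - t)), (symD T 1 D).
    split; auto. split; auto. apply Hgood; auto. exists t0; split; auto.
Qed.

Lemma pe j : (-1)^(2*j) = 1.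
Proof. apply pow_1_even. Qed.
Lemma po j : (-1)^(2*j+1) = -1.
Proof. replace (2*j+1)%nat with (S (2*j)) by lia. apply pow_1_odd. Qed.

Lemma par_split n (P : nat -> Prop) : (forall j, (j < n)%nat -> P (2*j)%nat) ->
  (forall j, (j < n)%nat -> P (2*j+1)%nat) -> forall k, (k < 2*n)%nat -> P k.
Proof.
  intros He Ho k Hk. destruct (Nat.Even_or_Odd k) as [[j Hj]|[j Hj]]; subst.
  apply He; lia. apply Ho; lia.
Qed.

Lemma par1 n (D : nat -> R -> R) x : (forall j, (j < n)%nat -> D (2*j+1)%nat x = 0) ->
  forall k, (k < 2*n)%nat -> 1 * (-1)^k * D k x = D k x.
Proof. intros H. apply par_split; intros j Hj. rewrite pe; ring. rewrite H; auto; ring. Qed.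
Lemma parm1 n (D : nat -> R -> R) x : (forall j, (j < n)%nat -> D (2*j)%nat x = 0) ->
  forall k, (k < 2*n)%nat -> -1 * (-1)^k * D k x = D k x.
Proof. intros H. apply par_split; intros j Hj. rewrite H; auto; ring. rewrite po; ring. Qed.

Lemma gl0 T c f : 0 < T -> glueF T c f 0 = f 0.
Proof. intros; apply glueF_le; lra. Qed.
Lemma gl2 T c f : 0 < T -> glueF T c f (2*T) = c * f 0.
Proof. intros; unfold glueF; destruct (Rle_dec (2*T) T); [lra|]. f_equal; f_equal; ring. Qed.

Lemma sym0 T s D k : symD T s D k 0 = D k 0 + s * ((-1)^k * D k (2*T)).
Proof. unfold symD. rewrite Rminus_0_r. auto. Qed.
Lemma symT T s D k : symD T s D k T = D k T + s * ((-1)^k * D k T).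
Proof. unfold symD. replace (2*T - T) with T by ring. auto. Qed.

Ltac bcsolve := repeat first [rewrite pe | rewrite po | rewrite sym0 | rewrite symT].

Section G.
Variables (n : nat) (T : R) (HT : 0 < T).

Lemma gN_P D : bcN n T D -> (forall k, (k < 2*n)%nat -> 1 * (-1)^k * D k T = D k T) /\ bcP n (2*T) (glD T 1 D).
Proof.
  intros H. split. apply par1; intros j Hj; apply H; auto.
  intros k Hk. unfold glD. rewrite gl0, gl2 by auto. symmetry. apply (par1 n D 0); auto.
  intros j Hj; apply H; auto.
Qed.
Lemma gD_P D : bcD n T D -> (forall k, (k < 2*n)%nat -> -1 * (-1)^k * D k T = D k T) /\ bcP n (2*T) (glD T (-1) D).
Proof.
  intros H. split. apply parm1; intros j Hj; apply H; auto.
  intros k Hk. unfold glD. rewrite gl0, gl2 by auto. symmetry. apply (parm1 n D 0); auto.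
  intros j Hj; apply H; auto.
Qed.
Lemma gN_N D : bcN n T D -> (forall k, (k < 2*n)%nat -> 1 * (-1)^k * D k T = D k T) /\ bcN n (2*T) (glD T 1 D).
Proof.
  intros H. split. apply par1; intros j Hj; apply H; auto.
  intros k Hk. unfold glD. rewrite gl0, gl2 by auto. destruct (H k Hk) as [H1 H2].
  rewrite H1. split; auto; ring.
Qed.
Lemma gM1_N D : bcM1 n T D -> (forall k, (k < 2*n)%nat -> -1 * (-1)^k * D k T = D k T) /\ bcN n (2*T) (glD T (-1) D).
Proof.
  intros H. split. apply parm1; intros j Hj; apply H; auto.
  intros k Hk. unfold glD. rewrite gl0, gl2 by auto. destruct (H k Hk) as [H1 H2].
  rewrite H1. split; auto; ring.
Qed.
Lemma gD_D D : bcD n T D -> (forall k, (k < 2*n)%nat -> -1 * (-1)^k * D k T = D k T) /\ bcD n (2*T) (glD T (-1) D).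
Proof.
  intros H. split. apply parm1; intros j Hj; apply H; auto.
  intros k Hk. unfold glD. rewrite gl0, gl2 by auto. destruct (H k Hk) as [H1 H2].
  rewrite H1. split; auto; ring.
Qed.
Lemma gM2_D D : bcM2 n T D -> (forall k, (k < 2*n)%nat -> 1 * (-1)^k * D k T = D k T) /\ bcD n (2*T) (glD T 1 D).
Proof.
  intros H. split. apply par1; intros j Hj; apply H; auto.
  intros k Hk. unfold glD. rewrite gl0, gl2 by auto. destruct (H k Hk) as [H1 H2].
  rewrite H1. split; auto; ring.
Qed.
Lemma gM1_A D : bcM1 n T D -> (forall k, (k < 2*n)%nat -> -1 * (-1)^k * D k T = D k T) /\ bcA n (2*T) (glD T (-1) D).
Proof.
  intros H. split. apply parm1; intros j Hj; apply H; auto.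
  intros k Hk. unfold glD. rewrite gl0, gl2 by auto.
  pose proof (par1 n D 0 ltac:(intros j Hj; apply H; auto) k Hk). lra.
Qed.
Lemma gM2_A D : bcM2 n T D -> (forall k, (k < 2*n)%nat -> 1 * (-1)^k * D k T = D k T) /\ bcA n (2*T) (glD T 1 D).
Proof.
  intros H. split. apply par1; intros j Hj; apply H; auto.
  intros k Hk. unfold glD. rewrite gl0, gl2 by auto.
  pose proof (parm1 n D 0 ltac:(intros j Hj; apply H; auto) k Hk). lra.
Qed.

Lemma sP D : bcP n (2*T) D -> bcN n T (symD T 1 D) /\ bcD n T (symD T (-1) D).
Proof.
  intros H. split; intros k Hk; bcsolve; pose proof (H (2*k+1)%nat ltac:(lia));
  pose proof (H (2*k)%nat ltac:(lia)); split; lra.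
Qed.
Lemma sN D : bcN n (2*T) D -> bcN n T (symD T 1 D) /\ bcM1 n T (symD T (-1) D).
Proof.
  intros H. split; intros k Hk; bcsolve; destruct (H k Hk) as [H1 H2]; rewrite ?H1, ?H2; split; ring.
Qed.
Lemma sD D : bcD n (2*T) D -> bcM2 n T (symD T 1 D) /\ bcD n T (symD T (-1) D).
Proof.
  intros H. split; intros k Hk; bcsolve; destruct (H k Hk) as [H1 H2]; rewrite ?H1, ?H2; split; ring.
Qed.
Lemma sA D : bcA n (2*T) D -> bcM2 n T (symD T 1 D) /\ bcM1 n T (symD T (-1) D).
Proof.
  intros H. split; intros k Hk; bcsolve; pose proof (H (2*k+1)%nat ltac:(lia));
  pose proof (H (2*k)%nat ltac:(lia)); split; lra.
Qed.
End G.

Lemma part1 n T a lam : (1 <= n)%nat -> 0 < T ->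
  (eigenvalue n T a bcN lam \/ eigenvalue n T a bcD lam) <->
  eigenvalue n (2 * T) (refl T a) bcP lam.
Proof.
  intros Hn HT. split.
  - intros [H|H]. apply (glue_eig n T a lam 1 bcN); auto. apply gN_P; auto.
    apply (glue_eig n T a lam (-1) bcD); auto. apply gD_P; auto.
  - intros H. apply (split_eig n T a lam bcP); auto. apply sP; auto.
Qed.
Lemma part2 n T a lam : (1 <= n)%nat -> 0 < T ->
  (eigenvalue n T a bcN lam \/ eigenvalue n T a bcM1 lam) <->
  eigenvalue n (2 * T) (refl T a) bcN lam.
Proof.
  intros Hn HT. split.
  - intros [H|H]. apply (glue_eig n T a lam 1 bcN); auto. apply gN_N; auto.
    apply (glue_eig n T a lam (-1) bcM1); auto. apply gM1_N; auto.
  - intros H. apply (split_eig n T a lam bcN); auto. apply sN; auto.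
Qed.
Lemma part3 n T a lam : (1 <= n)%nat -> 0 < T ->
  (eigenvalue n T a bcD lam \/ eigenvalue n T a bcM2 lam) <->
  eigenvalue n (2 * T) (refl T a) bcD lam.
Proof.
  intros Hn HT. split.
  - intros [H|H]. apply (glue_eig n T a lam (-1) bcD); auto. apply gD_D; auto.
    apply (glue_eig n T a lam 1 bcM2); auto. apply gM2_D; auto.
  - intros H. destruct (split_eig n T a lam bcD bcM2 bcD); auto. apply sD; auto.
Qed.
Lemma part4 n T a lam : (1 <= n)%nat -> 0 < T ->
  (eigenvalue n T a bcM1 lam \/ eigenvalue n T a bcM2 lam) <->
  eigenvalue n (2 * T) (refl T a) bcA lam.
Proof.
  intros Hn HT. split.
  - intros [H|H]. apply (glue_eig n T a lam (-1) bcM1); auto. apply gM1_A; auto.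
    apply (glue_eig n T a lam 1 bcM2); auto. apply gM2_A; auto.
  - intros H. destruct (split_eig n T a lam bcA bcM2 bcM1); auto. apply sA; auto.
Qed.

Lemma refl_eig n T b lam (BC1 BC2 : nat -> R -> (nat -> R -> R) -> Prop) :
  (1 <= n)%nat -> 0 < T -> eigenvalue n T b BC1 lam ->
  (forall D, BC1 n T D -> BC2 n T (fun k t => (-1)^k * D k (T - t))) ->
  eigenvalue n T (checkc T b) BC2 lam.
Proof.
  intros Hn HT He HB. apply eig_sol in He. destruct He as (u & D & Hsol & Hbc & t0 & Ht0 & Hu).
  apply eig_sol. exists (fun t => u (T - t)), (fun k t => (-1)^k * D k (T - t)).
  split. apply sol_refl; auto; lra. split. auto.
  exists (T - t0). split. unfold Icc in *; lra. replace (T - (T - t0)) with t0 by ring. auto.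
Qed.

Lemma eig_coef n L b b' BC lam : eigenvalue n L b BC lam ->
  (forall k t, Icc L t -> b k t = b' k t) -> eigenvalue n L b' BC lam.
Proof.
  intros He Hb. apply eig_sol in He. destruct He as (u & D & Hsol & Hbc & Hnt).
  apply eig_sol. exists u, D. split; auto. apply (sol_coef _ _ b _ _ _ _ 0); auto.
Qed.

Lemma checkK T a k t : checkc T (checkc T a) k t = a k t.
Proof. unfold checkc. replace (T - (T - t)) with t by ring. rewrite <- Rmult_assoc, pow_sq. ring. Qed.

Lemma rM1 n T D : bcM1 n T D -> bcM2 n T (fun k t => (-1)^k * D k (T - t)).
Proof.
  intros H k Hk. destruct (H k Hk) as [H1 H2]. rewrite Rminus_0_r.
  replace (T - T) with 0 by ring. rewrite H1, H2. split; ring.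
Qed.
Lemma rM2 n T D : bcM2 n T D -> bcM1 n T (fun k t => (-1)^k * D k (T - t)).
Proof.
  intros H k Hk. destruct (H k Hk) as [H1 H2]. rewrite Rminus_0_r.
  replace (T - T) with 0 by ring. rewrite H1, H2. split; ring.
Qed.

Lemma part67 n T a lam (BC1 BC2 : nat -> R -> (nat -> R -> R) -> Prop) : (1 <= n)%nat -> 0 < T ->
  (forall D, BC1 n T D -> BC2 n T (fun k t => (-1)^k * D k (T - t))) ->
  (forall D, BC2 n T D -> BC1 n T (fun k t => (-1)^k * D k (T - t))) ->
  (eigenvalue n T a BC1 lam <-> eigenvalue n T (checkc T a) BC2 lam).
Proof.
  intros Hn HT H12 H21. split; intros H.
  - apply refl_eig with BC1; auto.
  - apply (eig_coef _ _ (checkc T (checkc T a))). apply refl_eig with BC2; auto.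
    intros; apply checkK.
Qed.

Theorem mainTheorem6 (n : nat) (T alpha : R) (a : nat -> R -> R) :
  (1 <= n)%nat -> 0 < T -> 1 <= alpha ->
  (forall k, (k < 2 * n)%nat -> Lp T alpha (a k)) ->
  (forall lam, (eigenvalue n T a bcN lam \/ eigenvalue n T a bcD lam) <->
               eigenvalue n (2 * T) (refl T a) bcP lam) /\
  (forall lam, (eigenvalue n T a bcN lam \/ eigenvalue n T a bcM1 lam) <->
               eigenvalue n (2 * T) (refl T a) bcN lam) /\
  (forall lam, (eigenvalue n T a bcD lam \/ eigenvalue n T a bcM2 lam) <->
               eigenvalue n (2 * T) (refl T a) bcD lam) /\
  (forall lam, (eigenvalue n T a bcM1 lam \/ eigenvalue n T a bcM2 lam) <->
               eigenvalue n (2 * T) (refl T a) bcA lam) /\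
  (forall lam, (eigenvalue n T a bcN lam \/ eigenvalue n T a bcD lam \/
                eigenvalue n T a bcM1 lam \/ eigenvalue n T a bcM2 lam) <->
               eigenvalue n (4 * T) (refl (2 * T) (refl T a)) bcP lam) /\
  (forall lam, eigenvalue n T a bcM1 lam <-> eigenvalue n T (checkc T a) bcM2 lam) /\
  (forall lam, eigenvalue n T a bcM2 lam <-> eigenvalue n T (checkc T a) bcM1 lam).
Proof.
  intros Hn HT _ _.
  split; [intros; apply part1; auto|].
  split; [intros; apply part2; auto|].
  split; [intros; apply part3; auto|].
  split; [intros; apply part4; auto|].
  split.
  { intros lam. replace (4*T) with (2*(2*T)) by ring.
    rewrite <- part1 by (auto; lra). rewrite <- part2, <- part3 by auto. tauto. }
  split; intros lam; apply part67; auto; intros; (apply rM1 || apply rM2); auto.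
Qed.
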